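(* With $f$ as in the context (and $n\ge 3$), every $g\in G$ satisfies $\langle v_0\rangle g=\langle v_0\rangle$.
   Context: Let $p$ be a prime, $\mathbb{F}=\mathrm{GF}(p)$, and $n\ge 3$. Let $V$ be an $\mathbb{F}$-vector space with basis $v_0,\dots,v_n$, $U=\langle v_1,\dots,v_n\rangle$, $W=\Lambda^2V$. Maps are written on the right. For $g\in\mathrm{End}(V)$, $\widehat g$ denotes the induced linear map of $W$, $(x\wedge y)\widehat g=(xg)\wedge(yg)$. The linear map $f:V\to W$ is given by $v_0f=\sum_{i=1}^n b_i\, v_0\wedge v_i+\sum_{1\le j<k\le n}c_{j,k}\, v_j\wedge v_k$ and $v_if=\sum_{j=1}^n A_{i,j}\, v_0\wedge v_j$ for $1\le i\le n$, where $b\in\mathbb{F}^n$ and $c=(c_{j,k})\in\mathbb{F}^{\binom n2}$ are nonzero, and $A$ is the $n\times n$ companion matrix of the minimal polynomial over $\mathbb{F}$ of a primitive element of $\mathrm{GF}(p^n)$. Let $G=\{g\in \mathrm{GL}(V) : (vg)f=(vf)\widehat{g}\ \text{for all } v\in V\}$. *)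

(* Defs.v *)
From HB Require Import structures.
From mathcomp Require Import all_boot all_order all_algebra all_fingroup all_field.
Set Implicit Arguments. Unset Strict Implicit. Unset Printing Implicit Defensive.
Import GRing.Theory.
Local Open Scope ring_scope.

(* V = F^(n+1) as row vectors, basis vectors v_0 = e ord0, v_i = e (lift ord0 i'). 
   Maps act on the right: v |-> v *m g. *)
Definition evec (F : nzRingType) (m : nat) (i : 'I_m) : 'rV[F]_m := delta_mx 0 i.

(* W = Lambda^2 V is modelled as the space of alternating m x m matrices:
   x /\ y  |->  x^T y - y^T x. *)
Definition wedge (F : comNzRingType) (m : nat) (x y : 'rV[F]_m) : 'M[F]_m :=
  x^T *m y - y^T *m x.

(* The induced map g^ on Lambda^2 V: (x /\ y) g^ = (x g) /\ (y g), i.e. M |-> g^T M g. *)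
Definition hatmap (F : comNzRingType) (m : nat) (g : 'M[F]_m) (M : 'M[F]_m) : 'M[F]_m :=
  g^T *m M *m g.

(* The map f : V -> W of the paper, for b in F^n, c = (c_{j,k})_{j<k} (only the
   strictly upper triangular entries of the matrix c are used) and A in M_n(F). *)
Definition fmap (F : comNzRingType) (n : nat) (b : 'rV[F]_n) (c A : 'M[F]_n)
    (v : 'rV[F]_n.+1) : 'M[F]_n.+1 :=
  let e := @evec F n.+1 in
  let f0 := \sum_(i < n) b 0 i *: wedge (e ord0) (e (lift ord0 i))
          + \sum_(j < n) \sum_(k < n | (j < k)%N) c j k *: wedge (e (lift ord0 j)) (e (lift ord0 k)) in
  let fi (i : 'I_n) := \sum_(j < n) A i j *: wedge (e ord0) (e (lift ord0 j)) in
  v 0 ord0 *: f0 + \sum_(i < n) v 0 (lift ord0 i) *: fi i.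

(* The companion matrix of a polynomial q of size n+1, written out entrywise;
   this is exactly MathComp's [companionmx q] (mxpoly.v), which has type
   'M_((size q).-1), re-indexed at dimension n. *)
Definition companion_n (F : nzRingType) (n : nat) (q : {poly F}) : 'M[F]_n :=
  \matrix_(i < n, j < n)
    if (i == n.-1 :> nat) then - q`_j else (i.+1 == j :> nat)%:R.

Definition Fp_emb (p : nat) (L : nzRingType) (x : 'F_p) : L := (val x)%:R.

Definition primitive_elt (L : finFieldType) (z : L) : Prop :=
  forall y : L, y != 0 -> exists k : nat, y = z ^+ k.

Definition minpoly_Fp (p : nat) (L : fieldType) (z : L) (q : {poly 'F_p}) : Prop :=
  [/\ q \is monic, root (map_poly (@Fp_emb p L) q) z &
      forall r : {poly 'F_p}, r != 0 -> root (map_poly (@Fp_emb p L) r) z ->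
        (size q <= size r)%N].

(* Main.v *)
Require Import Defs.
From HB Require Import structures.
From mathcomp Require Import all_boot all_order all_algebra all_fingroup all_field.
From mathcomp Require Import zify ring.
Set Implicit Arguments. Unset Strict Implicit. Unset Printing Implicit Defensive.
Import GRing.Theory.
Local Open Scope ring_scope.

Section H.
Variable F : fieldType.

Lemma evecE m (i : 'I_m) j : evec F i 0 j = (j == i)%:R.
Proof. by rewrite /evec mxE eqxx. Qed.

Lemma wedgeE m (x y : 'rV[F]_m) i j : wedge x y i j = x 0 i * y 0 j - y 0 i * x 0 j.
Proof. by rewrite /wedge !mxE !big_ord1 !mxE. Qed.

Lemma hatmap_wedge m (g : 'M[F]_m) x y : hatmap g (wedge x y) = wedge (x *m g) (y *m g).
Proof.
by rewrite /hatmap /wedge mulmxBr mulmxBl !trmx_mul !mulmxA.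
Qed.

Definition Phi n (A : 'M[F]_n) : 'M[F]_n.+1 :=
  \matrix_(i, j) match unlift ord0 i, unlift ord0 j with
                 | Some i', Some j' => A i' j'
                 | None, None => 1
                 | _, _ => 0 end.

Lemma mulPhi0 n (A : 'M[F]_n) (v : 'rV_n.+1) : (v *m Phi A) 0 ord0 = v 0 ord0.
Proof.
rewrite mxE big_ord_recl /= !mxE unlift_none big1 ?addr0 ?mulr1 // => i _.
by rewrite !mxE liftK unlift_none mulr0.
Qed.

Lemma mulPhiS n (A : 'M[F]_n) (v : 'rV_n.+1) j :
  (v *m Phi A) 0 (lift ord0 j) = \sum_i v 0 (lift ord0 i) * A i j.
Proof.
rewrite mxE big_ord_recl /= !mxE unlift_none liftK mulr0 add0r.
by apply: eq_bigr => i _; rewrite !mxE !liftK.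
Qed.

Lemma wedge_sumr m (x : 'rV[F]_m) I (r : seq I) (P : pred I) G :
  wedge x (\sum_(i <- r | P i) G i) = \sum_(i <- r | P i) wedge x (G i).
Proof.
apply: (big_morph (wedge x)) => [y z|]; last by rewrite /wedge trmx0 mulmx0 mul0mx subr0.
by rewrite /wedge mulmxDr [(y+z)^T]linearD /= mulmxDl opprD addrACA.
Qed.

Lemma wedge_scaler m (x : 'rV[F]_m) a y : wedge x (a *: y) = a *: wedge x y.
Proof. by rewrite /wedge -scalemxAr [(a *: y)^T]linearZ /= -scalemxAl scalerBr. Qed.

Lemma fmapU n (b : 'rV[F]_n) (c A : 'M[F]_n) (v : 'rV[F]_n.+1) : v 0 ord0 = 0 ->
  fmap b c A v = wedge (evec F ord0) (v *m Phi A).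
Proof.
move=> v0; rewrite /fmap v0 scale0r add0r.
have -> : v *m Phi A = \sum_(i < n) \sum_(j < n) (v 0 (lift ord0 i) * A i j) *: evec F (lift ord0 j).
  apply/rowP => l; rewrite summxE; case: (unliftP ord0 l) => [l'|] ->.
    rewrite mulPhiS; apply: eq_bigr => i _; rewrite summxE (bigD1 l') //= big1.
      by rewrite !mxE !eqxx addr0 mulr1.
    by move=> j /negbTE jl; rewrite !mxE (inj_eq lift_inj) eq_sym jl mulr0.
  rewrite mulPhi0 v0 big1 // => i _; rewrite summxE big1 // => j _.
  by rewrite !mxE (negbTE (neq_lift _ _)) andbF mulr0.
rewrite wedge_sumr; apply: eq_bigr => i _.
rewrite wedge_sumr scaler_sumr; apply: eq_bigr => j _.
by rewrite wedge_scaler scalerA.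
Qed.
Lemma companion_inj n (q : {poly F}) (v : 'rV[F]_n) : (0 < n)%N -> q`_0 != 0 ->
  v *m companion_n n q = 0 -> v = 0.
Proof.
move=> n0 q0 vA.
have im_lt : (n.-1 < n)%N by lia.
pose im := Ordinal im_lt.
have key j : (v *m companion_n n q) 0 j
   = v 0 im * (- q`_j) + \sum_(i < n | i != im) v 0 i * (i.+1 == j)%:R.
  rewrite mxE (bigD1 im) //= !mxE eqxx; congr (_ + _); apply: eq_bigr => i ni.
  rewrite !mxE (_ : (i == n.-1 :> nat) = false) //.
  by apply/negbTE; apply: contra ni => /eqP h; apply/eqP/val_inj.
have vim : v 0 im = 0.
  have := key (Ordinal n0); rewrite vA mxE big1 ?addr0; last by move=> i _; rewrite mulr0.
  move/esym/eqP; rewrite mulf_eq0 oppr_eq0 (negbTE q0) orbF => /eqP //.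
apply/rowP => i; rewrite mxE.
have [->|ni] := eqVneq i im; first by [].
have lt : (i.+1 < n)%N.
  have : (nat_of_ord i != n.-1) by apply: contra ni => /eqP h; apply/eqP/val_inj.
  have := ltn_ord i; lia.
have := key (Ordinal lt); rewrite vA mxE vim mul0r add0r (bigD1 i) //= eqxx mulr1 big1 ?addr0 //.
move=> k /andP [_ nk]; rewrite (_ : (k.+1 == i.+1)%N = false) ?mulr0 //.
by apply/negbTE; apply: contra nk => /eqP [h]; apply/eqP/val_inj.
Qed.
End H.

Lemma Phi_free (F : fieldType) n (A : 'M[F]_n) :
  (forall w : 'rV_n, w *m A = 0 -> w = 0) -> row_free (Phi A).
Proof.
move=> Ainj; rewrite -kermx_eq0; apply/rowV0P => v /sub_kermxP vP.
have w0 : (\row_j v 0 (lift ord0 j)) *m A = 0.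
  apply/rowP => j; have h := mulPhiS A v j; rewrite vP mxE in h.
  rewrite [RHS]mxE; transitivity (\sum_i v 0 (lift ord0 i) * A i j) => //.
  by rewrite mxE; apply: eq_bigr => i _; rewrite mxE.
have := Ainj _ w0 => /rowP wz.
apply/rowP => j; case: (unliftP ord0 j) => [j'|] ->.
  by have := wz j'; rewrite !mxE.
by rewrite -(mulPhi0 A v) vP !mxE.
Qed.

Lemma map_horner p (L : finFieldType) (q : {poly 'F_p}) (z : L) :
  (map_poly (@Fp_emb p L) q).[z] = \sum_(i < size q) Fp_emb L q`_i * z ^+ i.
Proof.
have hs : (size (map_poly (@Fp_emb p L) q) <= size q)%N := size_poly _ _.
rewrite (horner_coef_wide _ hs); apply: eq_bigr => i _.
by rewrite coef_map_id0 // /Fp_emb.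
Qed.

Lemma q0_neq0 p n (L : finFieldType) (hp : prime p) (hn : (3 <= n)%N)
  (hL : #|L| = (p ^ n)%N) (z : L) (hz : primitive_elt z)
  (q : {poly 'F_p}) (hq : minpoly_Fp z q) : q`_0 != 0.
Proof.
have z0 : z != 0.
  apply/negP => /eqP z0.
  have sub : [set: L] \subset [set 0; 1].
    apply/subsetP => y _; rewrite !inE; case: (eqVneq y 0) => [//|ny] /=.
    have [k yk] := hz y ny; move: ny; rewrite yk z0 expr0n; case: (k == 0%N); by rewrite ?eqxx ?orbT.
  have := subset_leq_card sub; rewrite cardsT cards2 hL.
  have p2 := prime_gt1 hp.
  have : (2 ^ 3 <= p ^ n)%N.
    apply: (leq_trans (leq_pexp2l _ hn)) => //.
    by rewrite leq_exp2r //; lia.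
  case: (_ != _) => /=; lia.
case: hq => mq rq minq.
apply/negP => /eqP q0.
have sq : (2 <= size q)%N.
  have : q != 0 by apply: monic_neq0.
  rewrite -size_poly_eq0; case sz: (size q) => [|[|m]] //= _.
  move: mq; rewrite monicE /lead_coef sz /= q0 => /eqP h.
  by have := @oner_neq0 'F_p; rewrite -h eqxx.
set r := drop_poly 1 q.
have sr : size r = (size q - 1)%N by rewrite size_drop_poly.
have rnz : r != 0 by rewrite -size_poly_eq0 sr; lia.
have := minq r rnz; rewrite sr.
suff -> : root (map_poly (@Fp_emb p L) r) z by lia.
move: rq; rewrite /root !map_horner.
case sz: (size q) sq => [|m] // _.
rewrite big_ord_recl q0 /Fp_emb /= mul0r add0r sr sz subn1 /=.
rewrite (eq_bigr (fun i : 'I_m => z * (Fp_emb L r`_i * z ^+ i))).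
  by rewrite -mulr_sumr mulf_eq0 (negbTE z0).
move=> i _; rewrite coef_drop_poly addn1 exprS /Fp_emb /=.
by rewrite mulrCA.
Qed.

Lemma keyl (F : fieldType) n (b : 'rV[F]_n) (c A : 'M[F]_n) (g : 'M[F]_n.+1)
  (hG : forall v, fmap b c A (v *m g) = hatmap g (fmap b c A v)) (k : 'I_n)
  (hk : (evec F ord0 *m g) 0 (lift ord0 k) != 0) (r v : 'rV[F]_n.+1) :
  r 0 ord0 = 0 -> v 0 ord0 = 0 -> r = v *m g ->
  (r *m Phi A <= \row_j (if j == ord0 then 0 else (evec F ord0 *m g) 0 j))%MS.
Proof.
move=> r0 v0 rv.
have E := hG v; rewrite -rv (fmapU _ _ _ r0) (fmapU _ _ _ v0) hatmap_wedge in E.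
set y := evec F ord0 *m g in hk E *.
set a := r *m Phi A in E *; set z := v *m Phi A *m g in E.
have Eij i j : wedge (evec F ord0) a i j = wedge y z i j by rewrite E.
set k' := lift ord0 k in hk Eij.
pose lam := y 0 ord0 * z 0 k' / y 0 k' - z 0 ord0.
have -> : a = lam *: \row_j (if j == ord0 then 0 else y 0 j).
  apply/rowP => j; rewrite [RHS]mxE [in RHS]mxE; case: (unliftP ord0 j) => [j'|] ->.
    rewrite (eq_sym _ ord0) (negbTE (neq_lift _ _)).
    have e1 := Eij k' (lift ord0 j'); have e2 := Eij ord0 (lift ord0 j').
    rewrite !wedgeE !evecE in e1 e2.
    rewrite !(eq_sym _ ord0) !(negbTE (neq_lift _ _)) eqxx /= in e1 e2.
    rewrite /a mulPhi0 r0 in e2.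
    move: e1 e2; rewrite /lam.
    set Y0 := y 0 ord0; set Yk := y 0 k'; set Yj := y 0 (lift ord0 j').
    set Z0 := z 0 ord0; set Zk := z 0 k'; set Zj := z 0 (lift ord0 j').
    set Aj := a 0 (lift ord0 j').
    move=> e1 e2.
    have hz : Zj = Zk * Yj / Yk.
      have h1 : Yk * Zj = Zk * Yj.
        by move/eqP: e1; rewrite !mul0r !mulr0 subrr eq_sym subr_eq0 => /eqP.
      have hk2 : Yk != 0 := hk.
      by apply: (mulfI hk2); rewrite h1 [RHS]mulrC mulfVK.
    move: e2; rewrite !mul0r mul1r subr0 => ->; rewrite hz; have hk2 : Yk != 0 := hk; field; exact: hk2.
  by rewrite eqxx mulr0 /a mulPhi0.
by apply: scalemx_sub.
Qed.

Lemma kerE (F : fieldType) m (v : 'rV[F]_m.+1) :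
  (v <= kermx (evec F ord0)^T)%MS = (v 0 ord0 == 0).
Proof.
rewrite sub_kermx.
have -> : v *m (evec F ord0)^T = (v 0 ord0)%:M.
  apply/matrixP => i j; rewrite !ord1 !mxE (bigD1 ord0) //= big1 ?addr0.
    by rewrite !mxE eqxx mulr1.
  by move=> k nk; rewrite !mxE (negbTE nk) mulr0.
apply/eqP/eqP => [h|->]; last by rewrite raddf0.
by have := congr1 (fun M : 'M[F]_1 => M 0 0) h; rewrite !mxE eqxx.
Qed.

Theorem lemma3p2 (p n : nat) (hp : prime p) (hn : (3 <= n)%N)
  (L : finFieldType) (hL : #|L| = (p ^ n)%N) (z : L) (hz : primitive_elt z)
  (q : {poly 'F_p}) (hq : minpoly_Fp z q)
  (b : 'rV['F_p]_n) (hb : b != 0)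
  (c : 'M['F_p]_n) (hc : exists j k : 'I_n, (j < k)%N /\ c j k != 0)
  (g : 'M['F_p]_n.+1) (hg : g \in unitmx)
  (hG : forall v : 'rV['F_p]_n.+1,
          fmap b c (companion_n n q) (v *m g) = hatmap g (fmap b c (companion_n n q) v)) :
  (evec 'F_p ord0 *m g == evec 'F_p (@ord0 n))%MS.
Proof.
set A := companion_n n q in hG.
have Ainj : forall w : 'rV_n, w *m A = 0 -> w = 0.
  move=> w; apply: companion_inj; [lia | exact: (q0_neq0 hp hn hL hz hq)].
have Pfree := Phi_free Ainj.
have gfree : row_free g by rewrite row_free_unit.
set y := evec 'F_p ord0 *m g.
case: (boolP [exists k : 'I_n, y 0 (lift ord0 k) != 0]) => [/existsP [k hk]|].
  exfalso.
  set K := kermx (evec 'F_p (@ord0 n))^T.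
  have rK : \rank K = n.
    by rewrite mxrank_ker mxrank_tr /evec mxrank_delta subn1.
  have rKg : \rank (K *m g) = n by rewrite mxrankMfree.
  set Cap := (K *m g :&: K)%MS.
  have hs := mxrank_sum_cap (K *m g) K.
  have hs2 := rank_leq_col (K *m g + K)%MS.
  have sub : (Cap *m Phi A <= \row_j (if j == ord0 then 0 else y 0 j))%MS.
    apply/row_subP => i; rewrite row_mul.
    have := row_sub i Cap; rewrite sub_capmx => /andP [/submxP [w rw] r2].
    apply: (keyl hG hk).
    - by apply/eqP; rewrite -kerE.
    - by apply/eqP; rewrite -kerE; apply: submxMl.
    - by rewrite rw mulmxA.
  have := mxrankS sub; rewrite mxrankMfree // => h1.
  have h2 := rank_leq_row (\row_j (if j == ord0 then 0 else y 0 j)).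
  rewrite rK rKg -/Cap in hs; lia.
move/existsPn => hk.
have ye : y = y 0 ord0 *: evec 'F_p ord0.
  apply/rowP => j; rewrite [RHS]mxE evecE; case: (unliftP ord0 j) => [j'|] ->.
    by have := hk j'; rewrite negbK => /eqP ->; rewrite (eq_sym _ ord0) (negbTE (neq_lift _ _)) mulr0.
  by rewrite eqxx mulr1.
have y0 : y 0 ord0 != 0.
  apply/negP => /eqP h; move: ye; rewrite h scale0r => /eqP.
  rewrite /y mulmx_free_eq0 // => /eqP /rowP /(_ ord0); rewrite evecE eqxx !mxE.
  by move/eqP; rewrite oner_eq0.
by rewrite ye; apply/eqmxP; apply: eqmx_scale.
Qed.
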